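(* Let $(M,\mathcal F,D,g)$ be a foliated Hessian structure of constant normal Hessian sectional curvature $c$. Then the foliated Riemannian manifold $(M,\mathcal F,g)$ is modeled on a space form of constant sectional curvature $-\frac c4$, i.e. the normal Riemannian metric $g$ (equivalently the induced transverse metric) has constant sectional curvature $-\frac c4$.
   Context: $N(M,\mathcal F)=TM/T\mathcal F$. Foliated Hessian structure $(D,g)$: $D$ a flat torsion-free foliated connection in the normal bundle (adapted foliated affine coordinates $(x,y)$: adapted charts with affine transverse coordinate changes and $\overline{\partial/\partial y^i}$ $D$-parallel), $g$ a foliated Riemannian metric in the normal bundle with locally $g_{ij}=\partial^2h/\partial y^i\partial y^j$ for a function $h$ of $y$ only. $\gamma=\nabla-D$ with $\nabla$ the normal Levi-Civita connection of $g$; $Q=D\gamma$, $Q^i_{jkl}=\partial\gamma^i_{jl}/\partial y^k$, indices raised/lowered by $g$. $\hat Q(\xi)^{ik}=Q^i{}_j{}^k{}_l\xi^{jl}$ on symmetric contravariant normal 2-tensors $\xi$; the normal Hessian sectional curvature is $q(\xi)=\langle\hat Q(\xi),\xi\rangle/\langle\xi,\xi\rangle$, inner product induced by $g$; constant $c$ means $q\equiv c$. *)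

(* Defs.v *)
(* Local (adapted-chart) formalization of the
   transverse geometry of a foliated Hessian structure. *)
From HB Require Import structures.
From mathcomp Require Import all_boot all_order all_algebra.
From mathcomp Require Import all_classical all_reals all_analysis.
Set Implicit Arguments. Unset Strict Implicit. Unset Printing Implicit Defensive.
Import Order.TTheory GRing.Theory Num.Theory.
Import numFieldNormedType.Exports.
Local Open Scope ring_scope.
Local Open Scope classical_set_scope.

Section Transverse.
Variables (R : realType) (q : nat).
Notation V := 'rV[R]_q.

Definition ecoord (i : 'I_q) : V := delta_mx 0 i.

Definition pd (i : 'I_q) (f : V -> R) : V -> R := fun y => 'D_(ecoord i) f y.

Definition iter_pd (s : seq 'I_q) (f : V -> R) : V -> R := foldr pd f s.

Definition smooth_on (U : set V) (f : V -> R) : Prop :=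
  forall (s : seq 'I_q) (y : V), U y -> differentiable (iter_pd s f) y.

Variable h : V -> R.

(* metric coefficients g_ij = d^2 h / dy^i dy^j *)
Definition gco (i j : 'I_q) : V -> R := pd i (pd j h).
Definition gmx (y : V) : 'M[R]_q := \matrix_(i, j) gco i j y.
Definition ginv (y : V) : 'M[R]_q := invmx (gmx y).

Definition pos_def_on (U : set V) : Prop :=
  forall y, U y -> forall x : V, x != 0 ->
    0 < \sum_(i < q) \sum_(j < q) x 0 i * gco i j y * x 0 j.

(* Christoffel symbols Gamma^i_{jk} of the normal Levi-Civita connection;
   since D has vanishing Christoffel symbols in the affine coordinates y,
   these are also the components gamma^i_{jk} of gamma = nabla - D. *)
Definition gam (i j k : 'I_q) : V -> R := fun y =>
  2^-1 * \sum_(l < q) ginv y i l *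
     (pd j (gco l k) y + pd k (gco l j) y - pd l (gco j k) y).

Definition Qco (i j k l : 'I_q) (y : V) : R := pd k (gam i j l) y.

Definition Qup (i j k l : 'I_q) (y : V) : R :=
  \sum_(m < q) ginv y k m * Qco i j m l y.

Definition Qhat (y : V) (xi : 'M[R]_q) : 'M[R]_q :=
  \matrix_(i, k) \sum_(j < q) \sum_(l < q) Qup i j k l y * xi j l.

Definition tinner (y : V) (xi eta : 'M[R]_q) : R :=
  \sum_(i < q) \sum_(k < q) \sum_(a < q) \sum_(b < q)
     gco i a y * gco k b y * xi i k * eta a b.

Definition hess_sec (y : V) (xi : 'M[R]_q) : R :=
  tinner y (Qhat y xi) xi / tinner y xi xi.

Definition const_hess_sec (U : set V) (c : R) : Prop :=
  forall y, U y -> forall xi : 'M[R]_q, xi^T = xi -> xi != 0 -> hess_sec y xi = c.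

(* Riemann curvature R(d_k,d_l) d_j = Rm^i_{jkl} d_i,
   R(X,Y)Z = nabla_X nabla_Y Z - nabla_Y nabla_X Z - nabla_[X,Y] Z *)
Definition Rm (i j k l : 'I_q) (y : V) : R :=
  pd k (gam i l j) y - pd l (gam i k j) y +
  \sum_(m < q) (gam i k m y * gam m l j y - gam i l m y * gam m k j y).

Definition ginner (y : V) (X Y : V) : R :=
  \sum_(i < q) \sum_(j < q) X 0 i * gco i j y * Y 0 j.

Definition sec_curv (y : V) (X Y : V) : R :=
  (\sum_(a < q) \sum_(i < q) \sum_(j < q) \sum_(k < q) \sum_(l < q)
      gco a i y * Rm i j k l y * X 0 k * Y 0 l * Y 0 j * X 0 a)
  / (ginner y X X * ginner y Y Y - ginner y X Y ^+ 2).

Definition const_sec_curv (U : set V) (K : R) : Prop :=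
  forall y, U y -> forall X Y : V, \rank (col_mx X Y) = 2%N -> sec_curv y X Y = K.

End Transverse.

(* Main.v *)
Require Import Defs.
From HB Require Import structures.
From mathcomp Require Import all_boot all_order all_algebra.
From mathcomp Require Import all_classical all_reals all_analysis.
From mathcomp Require Import ring lra.
Set Implicit Arguments. Unset Strict Implicit. Unset Printing Implicit Defensive.
Import Order.TTheory GRing.Theory Num.Theory.
Import numFieldNormedType.Exports.
Local Open Scope ring_scope.
Local Open Scope classical_set_scope.

Section C4.
Variables (R : realFieldType) (q : nat).
Local Notation I := 'I_q.
Definition C4 (f : I -> I -> I -> I -> R) (p1 p2 p3 p4 : I -> R) : R :=
  \sum_a \sum_b \sum_c \sum_d f a b c d * p1 a * p2 b * p3 c * p4 d.

Lemma C4_ext f g p1 p2 p3 p4 : (forall a b c d, f a b c d = g a b c d) ->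
  C4 f p1 p2 p3 p4 = C4 g p1 p2 p3 p4.
Proof. by move=> H; rewrite /C4; do 4 (apply: eq_bigr => ? _); rewrite H. Qed.

Lemma C4_swap12 f p1 p2 p3 p4 :
  C4 f p1 p2 p3 p4 = C4 (fun a b c d => f b a c d) p2 p1 p3 p4.
Proof.
rewrite /C4 exchange_big; do 4 (apply: eq_bigr => ? _); ring.
Qed.
Lemma C4_swap23 f p1 p2 p3 p4 :
  C4 f p1 p2 p3 p4 = C4 (fun a b c d => f a c b d) p1 p3 p2 p4.
Proof.
rewrite /C4; apply: eq_bigr => a _; rewrite exchange_big; do 3 (apply: eq_bigr => ? _); ring.
Qed.
Lemma C4_swap34 f p1 p2 p3 p4 :
  C4 f p1 p2 p3 p4 = C4 (fun a b c d => f a b d c) p1 p2 p4 p3.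
Proof.
rewrite /C4; apply: eq_bigr => a _; apply: eq_bigr => b _; rewrite exchange_big;
  do 2 (apply: eq_bigr => ? _); ring.
Qed.
Lemma C4D f g p1 p2 p3 p4 :
  C4 (fun a b c d => f a b c d + g a b c d) p1 p2 p3 p4 = C4 f p1 p2 p3 p4 + C4 g p1 p2 p3 p4.
Proof.
rewrite /C4 -big_split; apply: eq_bigr => a _; rewrite -big_split;
 apply: eq_bigr => b _; rewrite -big_split; apply: eq_bigr => c _; rewrite -big_split;
 apply: eq_bigr => d _ /=; ring.
Qed.
Lemma C4Z k f p1 p2 p3 p4 :
  C4 (fun a b c d => k * f a b c d) p1 p2 p3 p4 = k * C4 f p1 p2 p3 p4.
Proof.
rewrite /C4 mulr_sumr; apply: eq_bigr => a _; rewrite mulr_sumr;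
 apply: eq_bigr => b _; rewrite mulr_sumr; apply: eq_bigr => c _; rewrite mulr_sumr;
 apply: eq_bigr => d _ /=; ring.
Qed.
End C4.

Section Alg.
Variables (R : realFieldType) (q : nat).
Local Notation I := 'I_q.
Variables (g B : I -> I -> R) (T : I -> I -> I -> R) (F : I -> I -> I -> I -> R).
Hypothesis gsym : forall a b, g a b = g b a.
Hypothesis Bsym : forall a b, B a b = B b a.
Hypothesis gB : forall a b, \sum_k g a k * B k b = (a == b)%:R.
Hypothesis T12 : forall a b c, T a b c = T b a c.
Hypothesis T23 : forall a b c, T a b c = T a c b.
Hypothesis F12 : forall a b c d, F a b c d = F b a c d.
Hypothesis F23 : forall a b c d, F a b c d = F a c b d.
Hypothesis F34 : forall a b c d, F a b c d = F a b d c.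

Lemma sum_delta (a : I) (f : I -> R) : \sum_m (a == m)%:R * f m = f a.
Proof.
rewrite (bigD1 a) //= eqxx mul1r big1 ?addr0 // => m /negbTE.
by rewrite eq_sym => ->; rewrite mul0r.
Qed.

Lemma sum_gB a (f : I -> R) : \sum_i g a i * (\sum_m B i m * f m) = f a.
Proof.
under eq_bigr do rewrite mulr_sumr.
rewrite exchange_big /= -[RHS]sum_delta; apply: eq_bigr => m _.
by rewrite -gB mulr_suml; apply: eq_bigr => i _; rewrite mulrA.
Qed.

Definition Th (p r s t : I) : R := \sum_b \sum_m T p r b * B b m * T m s t.
Definition gm (i j k : I) : R := 2^-1 * \sum_m B i m * T m j k.
Definition Qc (i j k l : I) : R := 2^-1 * \sum_m (B i m * F m j l k -
   T m j l * \sum_a \sum_b B i a * T k a b * B b m).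

Lemma Qc_alt i j k l : Qc i j k l = 2^-1 * \sum_m B i m * (F m j l k - Th k m j l).
Proof.
rewrite /Qc; congr (_ * _).
under [RHS]eq_bigr do rewrite mulrBr.
rewrite !sumrB; congr (_ - _).
rewrite /Th.
under eq_bigr do rewrite mulr_sumr.
under [RHS]eq_bigr do rewrite mulr_sumr.
rewrite exchange_big /=; apply: eq_bigr => a _.
under eq_bigr do rewrite mulr_sumr.
under [RHS]eq_bigr do rewrite mulr_sumr.
rewrite exchange_big /=; apply: eq_bigr => b _.
apply: eq_bigr => m _; ring.
Qed.

Definition Ql a j k l : R := \sum_i g a i * Qc i j k l.

Lemma Ql_eq a j k l : Ql a j k l = 2^-1 * (F a j l k - Th k a j l).
Proof.
rewrite /Ql; under eq_bigr do rewrite Qc_alt mulrCA.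
by rewrite -mulr_sumr sum_gB.
Qed.

Lemma gm_low a k m : \sum_i g a i * gm i k m = 2^-1 * T a k m.
Proof.
rewrite /gm; under eq_bigr do rewrite mulrCA.
by rewrite -mulr_sumr sum_gB.
Qed.

Definition aQup (Q : I -> I -> I -> I -> R) i j k l := \sum_(m < q) B k m * Q i j m l.
Definition aQhat Q (xi : 'M[R]_q) : 'M[R]_q :=
  \matrix_(i, k) \sum_(j < q) \sum_(l < q) aQup Q i j k l * xi j l.
Definition tin (xi eta : 'M[R]_q) : R :=
  \sum_(i < q) \sum_(k < q) \sum_(a < q) \sum_(b < q) g i a * g k b * xi i k * eta a b.
Definition HB (xi eta : 'M[R]_q) : R :=
  \sum_a \sum_b \sum_j \sum_l Ql a j b l * xi j l * eta a b.

Lemma HS_eq xi eta : tin (aQhat Qc xi) eta = HB xi eta.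
Proof.
rewrite /tin /HB.
under eq_bigr => i _ do (rewrite exchange_big; under eq_bigr => a _ do rewrite exchange_big).
rewrite exchange_big; apply: eq_bigr => a _ /=.
rewrite exchange_big; apply: eq_bigr => b _ /=.
have inner i : \sum_k g i a * g k b * aQhat Qc xi i k * eta a b =
    g i a * (\sum_j \sum_l Qc i j b l * xi j l) * eta a b.
  rewrite -mulr_suml; congr (_ * _); under eq_bigr do rewrite -mulrA; rewrite -mulr_sumr; congr (_ * _).
  rewrite -(sum_gB b (fun m => \sum_j \sum_l Qc i j m l * xi j l)).
  apply: eq_bigr => k _; rewrite mxE gsym; congr (_ * _).
  under [RHS]eq_bigr do rewrite mulr_sumr. rewrite [RHS]exchange_big; apply: eq_bigr => j _ /=.
  under [RHS]eq_bigr do rewrite mulr_sumr. rewrite [RHS]exchange_big; apply: eq_bigr => l _ /=.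
  by rewrite /aQup big_distrl; apply: eq_bigr => m _ /=; ring.
under eq_bigr do rewrite inner.
rewrite /Ql; under eq_bigr do rewrite mulr_sumr big_distrl /=.
rewrite exchange_big /=; apply: eq_bigr => j _.
under eq_bigr do rewrite mulr_sumr big_distrl /=.
rewrite exchange_big /=; apply: eq_bigr => l _.
rewrite !big_distrl /=; apply: eq_bigr => i _; rewrite gsym; ring.
Qed.

Definition outer (u v : I -> R) : 'M[R]_q := \matrix_(j, l) (u j * v l).

Lemma C4B (f1 f2 : I -> I -> I -> I -> R) p1 p2 p3 p4 : C4 (fun a b c d => f1 a b c d - f2 a b c d) p1 p2 p3 p4 =
  C4 f1 p1 p2 p3 p4 - C4 f2 p1 p2 p3 p4.
Proof. rewrite -[- C4 f2 _ _ _ _]mulN1r -C4Z -C4D; apply: C4_ext => * /=; ring. Qed.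

Lemma HB_outer u v w z :
  HB (outer u v) (outer w z) = 2^-1 * (C4 F w u v z - C4 Th z w u v).
Proof.
have -> : HB (outer u v) (outer w z) = C4 Ql w u z v.
  rewrite /HB /C4; apply: eq_bigr => a _; rewrite exchange_big /=.
  do 3 (apply: eq_bigr => ? _); rewrite !mxE; ring.
rewrite (C4_ext w u z v (fun a j b l => Ql_eq a j b l)).
rewrite (C4Z 2^-1 (fun a j b l => F a j l b - Th b a j l)).
rewrite (C4B (fun a j b l => F a j l b) (fun a j b l => Th b a j l)).
by rewrite C4_swap34 [X in _ - X]C4_swap23 [X in _ - X]C4_swap12.
Qed.

Lemma TS a b c : T a b c = T b c a.
Proof. by rewrite T12 T23. Qed.

Lemma Th12 p r s t : Th p r s t = Th r p s t.
Proof. by rewrite /Th; do 2 (apply: eq_bigr => ? _); rewrite T12. Qed.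
Lemma Th34 p r s t : Th p r s t = Th p r t s.
Proof. by rewrite /Th; do 2 (apply: eq_bigr => ? _); rewrite [T _ s t]T23. Qed.
Lemma Thp p r s t : Th p r s t = Th s t p r.
Proof.
rewrite /Th exchange_big; apply: eq_bigr => x _; apply: eq_bigr => y _.
by rewrite (TS x s t) (TS y p r) (Bsym y x); ring.
Qed.

Lemma C4F12 p1 p2 p3 p4 : C4 F p1 p2 p3 p4 = C4 F p2 p1 p3 p4.
Proof. by rewrite C4_swap12; apply: C4_ext => *; rewrite F12. Qed.
Lemma C4F23 p1 p2 p3 p4 : C4 F p1 p2 p3 p4 = C4 F p1 p3 p2 p4.
Proof. by rewrite C4_swap23; apply: C4_ext => *; rewrite F23. Qed.
Lemma C4F34 p1 p2 p3 p4 : C4 F p1 p2 p3 p4 = C4 F p1 p2 p4 p3.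
Proof. by rewrite C4_swap34; apply: C4_ext => *; rewrite F34. Qed.
Lemma C4Th12 p1 p2 p3 p4 : C4 Th p1 p2 p3 p4 = C4 Th p2 p1 p3 p4.
Proof. by rewrite C4_swap12; apply: C4_ext => *; rewrite Th12. Qed.
Lemma C4Th34 p1 p2 p3 p4 : C4 Th p1 p2 p3 p4 = C4 Th p1 p2 p4 p3.
Proof. by rewrite C4_swap34; apply: C4_ext => *; rewrite Th34. Qed.
Lemma C4Thp p1 p2 p3 p4 : C4 Th p1 p2 p3 p4 = C4 Th p3 p4 p1 p2.
Proof.
rewrite C4_swap23 C4_swap12 C4_swap34 C4_swap23; apply: C4_ext => * /=.
by rewrite Thp.
Qed.

Definition Rmc i j k l : R := Qc i l k j - Qc i k l j +
  \sum_m (gm i k m * gm m l j - gm i l m * gm m k j).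
Definition Nc (x y : I -> R) : R := \sum_a \sum_i \sum_j \sum_k \sum_l
  g a i * Rmc i j k l * x k * y l * y j * x a.

Lemma h4 : (4:R)^-1 = 2^-1 * 2^-1.
Proof. by rewrite -invfM; congr (_^-1); ring. Qed.

Lemma Rl_eq a j k l : \sum_i g a i * Rmc i j k l =
  2^-1 * F a l j k + (- 2^-1) * F a k j l + (- 2^-1) * Th k a l j +
  2^-1 * Th l a k j + 4^-1 * Th a k l j + (- 4^-1) * Th a l k j.
Proof.
rewrite /Rmc.
rewrite (eq_bigr (fun i => g a i * Qc i l k j - g a i * Qc i k l j +
   (\sum_m g a i * gm i k m * gm m l j - \sum_m g a i * gm i l m * gm m k j))); last first.
  move=> i _; rewrite -sumrB mulrDr mulrBr mulr_sumr; congr (_ + _).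
  by apply: eq_bigr => m _; ring.
rewrite big_split /= sumrB -!/(Ql _ _ _ _) !Ql_eq sumrB.
rewrite [X in _ + (X - _)]exchange_big [X in _ + (_ - X)]exchange_big /=.
have hh : forall k0 l0 j0, \sum_m \sum_i g a i * gm i k0 m * gm m l0 j0 = 4^-1 * Th a k0 l0 j0.
  move=> k0 l0 j0; rewrite /Th mulr_sumr; apply: eq_bigr => m _.
  rewrite (eq_bigr (fun i => (g a i * gm i k0 m) * gm m l0 j0)); last by move=> *; ring.
  rewrite -big_distrl /= gm_low /gm !mulr_sumr; apply: eq_bigr => n _; rewrite h4; ring.
rewrite !hh; ring.
Qed.

Lemma Nc_C4 x y : Nc x y = C4 (fun a j k l => \sum_i g a i * Rmc i j k l) x y x y.
Proof.
rewrite /Nc /C4; apply: eq_bigr => a _.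
rewrite exchange_big; apply: eq_bigr => j _ /=.
rewrite exchange_big; apply: eq_bigr => k _ /=.
rewrite exchange_big; apply: eq_bigr => l _ /=.
rewrite !big_distrl; apply: eq_bigr => i _ /=; ring.
Qed.

Lemma Nc_eq x y : Nc x y = - 4^-1 * (C4 Th x x y y - C4 Th x y x y).
Proof.
rewrite Nc_C4 (C4_ext x y x y (fun a j k l => Rl_eq a j k l)).
rewrite !C4D !C4Z.
have e1 : C4 (fun a j k l => F a l j k) x y x y = C4 F x x y y.
  by rewrite C4_swap34 C4_swap23 [LHS]C4F34 [LHS]C4F23.
have e2 : C4 (fun a j k l => F a k j l) x y x y = C4 F x x y y.
  by rewrite C4_swap23.
have e3 : C4 (fun a j k l => Th k a l j) x y x y = C4 Th x x y y.
  by rewrite C4_swap23 C4_swap12 C4_swap34.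
have e4 : C4 (fun a j k l => Th l a k j) x y x y = C4 Th x y x y.
  by rewrite C4_swap23 C4_swap34 C4_swap23 C4_swap12 C4Th12.
have e5 : C4 (fun a j k l => Th a k l j) x y x y = C4 Th x x y y.
  by rewrite C4_swap23 C4_swap34.
have e6 : C4 (fun a j k l => Th a l k j) x y x y = C4 Th x y x y.
  by rewrite C4_swap23 C4_swap34 C4_swap23.
rewrite e1 e2 e3 e4 e5 e6 h4. move: (C4 F x x y y) (C4 Th x x y y) (C4 Th x y x y) => u v w. lra.
Qed.
Definition g2 (u v : I -> R) : R := \sum_i \sum_j u i * g i j * v j.

Lemma g2sym u v : g2 u v = g2 v u.
Proof.
rewrite /g2 exchange_big; apply: eq_bigr => i _; apply: eq_bigr => j _.
by rewrite gsym; ring.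
Qed.

Lemma tin_outer u v w z : tin (outer u v) (outer w z) = g2 u w * g2 v z.
Proof.
rewrite /tin /g2 big_distrl; apply: eq_bigr => i _ /=.
rewrite exchange_big big_distrl; apply: eq_bigr => a _ /=.
rewrite mulr_sumr; apply: eq_bigr => k _ /=.
rewrite mulr_sumr; apply: eq_bigr => b _ /=.
rewrite !mxE; ring.
Qed.

Lemma tinDl a b c : tin (a + b) c = tin a c + tin b c.
Proof.
rewrite /tin -big_split; apply: eq_bigr => i _; rewrite -big_split; apply: eq_bigr => k _.
rewrite -big_split; apply: eq_bigr => a' _; rewrite -big_split; apply: eq_bigr => b' _.
rewrite !mxE /=; ring.
Qed.
Lemma tinDr a b c : tin c (a + b) = tin c a + tin c b.
Proof.
rewrite /tin -big_split; apply: eq_bigr => i _; rewrite -big_split; apply: eq_bigr => k _.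
rewrite -big_split; apply: eq_bigr => a' _; rewrite -big_split; apply: eq_bigr => b' _.
rewrite !mxE /=; ring.
Qed.
Lemma HBDl a b c : HB (a + b) c = HB a c + HB b c.
Proof.
rewrite /HB -big_split; apply: eq_bigr => i _; rewrite -big_split; apply: eq_bigr => k _.
rewrite -big_split; apply: eq_bigr => a' _; rewrite -big_split; apply: eq_bigr => b' _.
rewrite !mxE /=; ring.
Qed.
Lemma HBDr a b c : HB c (a + b) = HB c a + HB c b.
Proof.
rewrite /HB -big_split; apply: eq_bigr => i _; rewrite -big_split; apply: eq_bigr => k _.
rewrite -big_split; apply: eq_bigr => a' _; rewrite -big_split; apply: eq_bigr => b' _.
rewrite !mxE /=; ring.
Qed.

Lemma outerT u v : (outer u v)^T = outer v u.
Proof. by apply/matrixP => i j; rewrite !mxE mulrC. Qed.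

Lemma tin_ne0 xi : tin xi xi != 0 -> xi != 0.
Proof.
apply: contra => /eqP ->; apply/eqP; rewrite /tin big1 // => i _; rewrite big1 // => k _.
rewrite big1 // => a' _; rewrite big1 // => b' _; rewrite !mxE; ring.
Qed.

Lemma alg_core (c : R) (x y : I -> R) :
  (forall xi, xi^T = xi -> tin xi xi != 0 -> HB xi xi = c * tin xi xi) ->
  0 < g2 x x -> 0 < g2 y y ->
  C4 Th x x y y - C4 Th x y x y = c * (g2 x x * g2 y y - g2 x y ^+ 2).
Proof.
move=> HH gx gy.
have sq u v : 0 <= g2 u v * g2 u v by rewrite -expr2 sqr_ge0.
have H1 := HH (outer x x) (outerT x x).
have H2 := HH (outer y y) (outerT y y).
have H3 := HH (outer x x + outer y y).
have H4 := HH (outer x y + outer y x).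
rewrite !tin_outer in H1 H2.
rewrite !tinDl !tinDr !tin_outer !HBDl !HBDr !HB_outer in H3 H4.
rewrite !HB_outer in H1 H2.
rewrite linearD /= !outerT in H3 H4.
rewrite (g2sym y x) in H3 H4.
have f1 : C4 F y x x y = C4 F x x y y by rewrite (C4F12 y x x y) (C4F23 x y x y).
have f2 : C4 F x y y x = C4 F x x y y by rewrite (C4F34 x y y x) (C4F23 x y x y).
have f3 : C4 F y x y x = C4 F x x y y.
  by rewrite (C4F12 y x y x) (C4F34 x y y x) (C4F23 x y x y).
have f4 : C4 F x y x y = C4 F x x y y by rewrite (C4F23 x y x y).
have f5 : C4 F y y x x = C4 F x x y y.
  by rewrite (C4F23 y y x x) (C4F12 y x y x) (C4F34 x y y x) (C4F23 x y x y).
have t1 : C4 Th y y x x = C4 Th x x y y by rewrite (C4Thp y y x x).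
have t2 : C4 Th y x x y = C4 Th x y x y by rewrite (C4Th12 y x x y).
have t3 : C4 Th y x y x = C4 Th x y x y by rewrite (C4Th12 y x y x) (C4Th34 x y y x).
have t4 : C4 Th x y y x = C4 Th x y x y by rewrite (C4Th34 x y y x).
rewrite ?f1 ?f2 ?f3 ?f4 ?f5 ?t1 ?t2 ?t3 ?t4 in H3 H4.
have T4 : (outer x y + outer y x)^T = outer x y + outer y x.
  by rewrite linearD /= !outerT addrC.
move: H1 H2 H3 (H4 T4).
move: (C4 F x x y y) (C4 F x x x x) (C4 F y y y y) (C4 Th x x y y) (C4 Th x y x y)
  (C4 Th x x x x) (C4 Th y y y y) => a1 a2 a3 a4 a5 a6 a7.
move: (g2 x x) (g2 y y) (g2 x y) gx gy (sq x y) => gxx gyy gxy gx' gy' sxy.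
move=> H1 H2 H3 H4'.
have k1 : 0 < gxx * gyy by rewrite mulr_gt0.
have k2 : 0 < gxx * gxx by rewrite mulr_gt0.
have k3 : 0 < gyy * gyy by rewrite mulr_gt0.
have p1 : gxx * gxx != 0 by rewrite gt_eqF.
have p2 : gyy * gyy != 0 by rewrite gt_eqF.
have p3 : gxx * gxx + gxy * gxy + (gxy * gxy + gyy * gyy) != 0.
  by rewrite gt_eqF //; lra.
have p4 : gxx * gyy + gxy * gxy + (gxy * gxy + gyy * gxx) != 0.
  by rewrite gt_eqF //; lra.
move: (H1 p1) (H2 p2) (H3 erefl p3) (H4' p4) => {H1 H2 H3 H4'}.
rewrite expr2; lra.
Qed.
Lemma g2_lin_l a b u v w : g2 (fun i => a * u i + b * v i) w = a * g2 u w + b * g2 v w.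
Proof.
rewrite /g2 !mulr_sumr -big_split; apply: eq_bigr => i _ /=.
rewrite !mulr_sumr -big_split; apply: eq_bigr => j _ /=; ring.
Qed.
Lemma g2_lin_r a b u v w : g2 w (fun i => a * u i + b * v i) = a * g2 w u + b * g2 w v.
Proof. by rewrite g2sym g2_lin_l !(g2sym w). Qed.

Lemma rank_indep (X Y : 'rV[R]_q) : \rank (col_mx X Y) = 2%N ->
  forall k, X != k *: Y /\ Y != k *: X.
Proof.
move=> rk k; split; apply/negP => /eqP E.
- have : (\rank (col_mx X Y) <= 1)%N.
    have -> : col_mx X Y = col_mx (k%:M : 'M[R]_1) (1%:M) *m Y.
      by rewrite mul_col_mx !mul_scalar_mx scale1r E.
    exact: leq_trans (mxrankM_maxr _ _) (rank_leq_row _).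
  by rewrite rk.
- have : (\rank (col_mx X Y) <= 1)%N.
    have -> : col_mx X Y = col_mx (1%:M : 'M[R]_1) (k%:M) *m X.
      by rewrite mul_col_mx !mul_scalar_mx scale1r E.
    exact: leq_trans (mxrankM_maxr _ _) (rank_leq_row _).
  by rewrite rk.
Qed.

Definition rv (X : 'rV[R]_q) : I -> R := fun i => X 0 i.

Lemma alg_final (c : R) (X Y : 'rV[R]_q) :
  (forall x : 'rV[R]_q, x != 0 -> 0 < g2 (rv x) (rv x)) ->
  (forall xi, xi^T = xi -> xi != 0 -> tin (aQhat Qc xi) xi / tin xi xi = c) ->
  \rank (col_mx X Y) = 2%N ->
  Nc (rv X) (rv Y) / (g2 (rv X) (rv X) * g2 (rv Y) (rv Y) - g2 (rv X) (rv Y) ^+ 2)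
   = - (c / 4).
Proof.
move=> pos HH rk.
have _ := (gsym, Bsym, gB, T12, T23, F12, F23, F34).
have HH' xi : xi^T = xi -> tin xi xi != 0 -> HB xi xi = c * tin xi xi.
  by move=> xs t0; rewrite -HS_eq -(HH xi xs (tin_ne0 t0)) divfK.
have [nX _] := rank_indep rk 0; rewrite scale0r in nX.
have [_ nY] := rank_indep rk 0; rewrite scale0r in nY.
have gx := pos _ nX; have gy := pos _ nY.
set gxx := g2 (rv X) (rv X) in gx *; set gyy := g2 (rv Y) (rv Y) in gy *.
set gxy := g2 (rv X) (rv Y).
have core := alg_core HH' gx gy.
have den : 0 < gxx * gyy - gxy ^+ 2.
  set Z := gyy *: X + (- gxy) *: Y.
  have nZ : Z != 0.
    apply/negP => /eqP Z0; have [nX' _] := rank_indep rk (gxy / gyy).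
    move/negP: nX'; apply; apply/eqP.
    have : gyy *: X = gxy *: Y.
      by apply/eqP; rewrite -subr_eq0 -scaleNr; apply/eqP.
    move=> /(congr1 (fun M => gyy^-1 *: M)); rewrite !scalerA mulVf ?gt_eqF // scale1r.
    by rewrite mulrC.
  have := pos _ nZ.
  have -> : g2 (rv Z) (rv Z) = g2 (fun i => gyy * rv X i + (- gxy) * rv Y i)
      (fun i => gyy * rv X i + (- gxy) * rv Y i).
    by rewrite /g2; apply: eq_bigr => i _; apply: eq_bigr => j _; rewrite /rv !mxE.
  rewrite g2_lin_l !g2_lin_r -/gxx -/gyy -/gxy (g2sym (rv Y)) -/gxy => H.
  have : 0 < gyy * (gxx * gyy - gxy ^+ 2) by move: H; rewrite expr2; congr (0 < _); ring.
  by rewrite pmulr_rgt0.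
rewrite Nc_eq core mulrA mulfK ?gt_eqF //; lra.
Qed.
End Alg.

Section Line.
Variables (R : realType) (q : nat).
Local Notation V := 'rV[R]_q.

Lemma line_fun (f : V -> R) (v c : V) (s : R) :
  (fun h : R => h^-1 *: ((fun u : R => f (u *: v + c)) (h *: 1 + s) - f (s *: v + c)))
  = (fun h : R => h^-1 *: ((f \o shift (s *: v + c)) (h *: v) - f (s *: v + c))).
Proof.
apply: funext => h /=; congr (_ *: (f _ - _)).
by rewrite scaler1 scalerDl addrA.
Qed.

Lemma line_derivable (f : V -> R) (v c : V) (s : R) :
  derivable f (s *: v + c) v -> derivable (fun u : R => f (u *: v + c)) s 1.
Proof. by rewrite /derivable /= line_fun. Qed.

Lemma line_derive (f : V -> R) (v c : V) (s : R) :
  'D_1 (fun u : R => f (u *: v + c)) s = 'D_v f (s *: v + c).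
Proof. by rewrite /derive /= line_fun. Qed.

Lemma line_is_derive (f : V -> R) (v c : V) (s : R) :
  derivable f (s *: v + c) v ->
  is_derive s 1 (fun u : R => f (u *: v + c)) ('D_v f (s *: v + c)).
Proof.
by move=> d; apply: DeriveDef; [exact: line_derivable | exact: line_derive].
Qed.

Lemma mvt0 (g : R -> R) (t : R) : 0 < t -> (forall s, 0 <= s <= t -> derivable g s 1) ->
  exists2 s, 0 < s < t & g t - g 0 = 'D_1 g s * t.
Proof.
move=> t0 dg.
have d1 : forall x, x \in `]0, t[%R -> is_derive x 1 g ('D_1 g x).
  move=> x; rewrite in_itv /= => /andP[x0 xt]; apply: derivableP; apply: dg.
  by rewrite !ltW.
have c1 : {within `[0, t], continuous g}.
  apply: continuous_in_subspaceT => x; rewrite inE /= in_itv /= => xt.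
  by apply: differentiable_continuous; apply/derivable1_diffP; apply: dg.
have [s] := MVT t0 d1 c1.
by rewrite in_itv /= subr0 => st ->; exists s.
Qed.

Definition Dq (f : V -> R) (v w y : V) (t : R) :=
  (f (t *: v + (t *: w + y)) - f (t *: v + y)) - (f (0 *: v + (t *: w + y)) - f (0 *: v + y)).

Lemma Dq_sym f v w y t : Dq f v w y t = Dq f w v y t.
Proof.
rewrite /Dq !scale0r !add0r addrCA; lra.
Qed.

Lemma young_step (f : V -> R) (U : set V) (v w y : V) (r t : R) :
  ball y r `<=` U ->
  (forall z, U z -> differentiable f z) ->
  (forall z, U z -> differentiable ('D_v f) z) ->
  0 < t -> t * (`|v| + `|w| + 1) < r ->
  exists z, `|y - z| < t * (`|v| + `|w| + 1) /\
    Dq f v w y t = t ^+ 2 * 'D_w ('D_v f) z.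
Proof.
move=> bU df dvf t0 tr.
set K := `|v| + `|w| + 1.
have nrm a b : 0 <= a <= t -> 0 <= b <= t -> `|y - (a *: v + (b *: w + y))| < t * K.
  move=> /andP[a0 at_] /andP[b0 bt].
  rewrite addrA opprD addrCA subrr addr0 normrN.
  apply: le_lt_trans (ler_normD _ _) _; rewrite !normrZ !ger0_norm //.
  rewrite /K; have := normr_ge0 v; have := normr_ge0 w; nra.
have inU a b : 0 <= a <= t -> 0 <= b <= t -> U (a *: v + (b *: w + y)).
  move=> ha hb; apply: bU; rewrite -ball_normE /ball_ /=.
  exact: lt_trans (nrm a b ha hb) tr.
have t0' : (0:R) <= 0 <= t by apply/andP; split; [|exact: ltW].
have tt : (0:R) <= t <= t by apply/andP; split; [exact: ltW|].
have inU0 a : 0 <= a <= t -> U (a *: v + y).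
  by move=> ha; have := inU a 0 ha t0'; rewrite scale0r add0r.
pose phi := fun s => f (s *: v + (t *: w + y)) - f (s *: v + y).
have dphi s : 0 <= s <= t -> derivable phi s 1.
  move=> hs; apply: derivableB; apply: line_derivable; apply: diff_derivable.
    exact: df (inU s t hs tt).
  exact: df (inU0 s hs).
have [s1 /andP[s10 s1t] E1] := mvt0 t0 dphi.
have hs1 : 0 <= s1 <= t by rewrite !ltW.
have E1' : Dq f v w y t = ('D_v f (t *: w + (s1 *: v + y)) - 'D_v f (0 *: w + (s1 *: v + y))) * t.
  rewrite /Dq -/(phi t) -/(phi 0) E1 /phi deriveB.
  - by rewrite !line_derive scale0r add0r addrCA.
  - by apply: line_derivable; apply: diff_derivable; exact: df (inU s1 t hs1 tt).
  - by apply: line_derivable; apply: diff_derivable; exact: df (inU0 s1 hs1).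
pose psi := fun u => 'D_v f (u *: w + (s1 *: v + y)).
have dpsi u : 0 <= u <= t -> derivable psi u 1.
  move=> hu; apply: (@line_derivable ('D_v f)); apply: diff_derivable.
  by have := dvf _ (inU s1 u hs1 hu); rewrite [s1 *: v + _]addrCA.
have [u1 /andP[u10 u1t] E2] := mvt0 t0 dpsi.
exists (u1 *: w + (s1 *: v + y)); split.
  by rewrite addrCA; apply: nrm => //; rewrite !ltW.
by rewrite E1' -/(psi t) -/(psi 0) E2 /psi (@line_derive ('D_v f)); ring.
Qed.
Lemma cont_ball (g : V -> R) y e : {for y, continuous g} -> 0 < e ->
  exists2 d, 0 < d & forall z, `|y - z| < d -> `|g y - g z| < e.
Proof.
move=> cg e0; have /cvgrPdist_lt/(_ e e0) := cg.
move/nbhs_ballP => [d d0 hd]; exists d => // z hz; apply: hd.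
by rewrite -ball_normE /ball_ /=.
Qed.

Lemma young (f : V -> R) (U : set V) (v w y : V) : open U -> U y ->
  (forall z, U z -> differentiable f z) ->
  (forall z, U z -> differentiable ('D_v f) z) ->
  (forall z, U z -> differentiable ('D_w f) z) ->
  {for y, continuous ('D_w ('D_v f))} -> {for y, continuous ('D_v ('D_w f))} ->
  'D_w ('D_v f) y = 'D_v ('D_w f) y.
Proof.
move=> oU Uy df dvf dwf cA cB.
have /nbhs_ballP[r r0 bU] : nbhs y U by apply: open_nbhs_nbhs.
set A := 'D_w ('D_v f); set Bf := 'D_v ('D_w f).
apply/eqP; apply/negPn/negP => neq.
set e := `|A y - Bf y| / 2.
have e0 : 0 < e by rewrite divr_gt0 // normr_gt0 subr_eq0.
have [dA dA0 hA] := cont_ball cA e0.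
have [dB dB0 hB] := cont_ball cB e0.
set K := `|v| + `|w| + 1.
have K0 : 0 < K by rewrite /K ltr_wpDl ?addr_ge0.
set m := Num.min (Num.min r dA) dB.
have m0 : 0 < m by rewrite /m !lt_min r0 dA0 dB0.
have mr : m <= r by rewrite /m !ge_min lexx.
have mA : m <= dA by rewrite /m !ge_min lexx orbT.
have mB : m <= dB by rewrite /m !ge_min lexx orbT.
set t := m / (2 * K).
have t0 : 0 < t by rewrite divr_gt0 // mulr_gt0.
have tK : t * K = m / 2.
  by rewrite /t invfM mulrA -mulrA mulVf ?gt_eqF // mulr1.
have tKm : t * K < m.
  by rewrite tK ltr_pdivrMr // ltr_pMr // ltr1n.
have [z1 [hz1 E1]] := young_step bU df dvf t0 (lt_le_trans tKm mr).
have K' : `|w| + `|v| + 1 = K by rewrite /K (addrC `|w|).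
have [z2 [hz2 E2]] : exists z, `|y - z| < t * K /\ Dq f w v y t = t ^+ 2 * Bf z.
  have := young_step (v:=w) (w:=v) bU df dwf t0; rewrite K' => /(_ (lt_le_trans tKm mr)).
  by [].
rewrite Dq_sym E2 in E1.
have AB : A z1 = Bf z2.
  by apply: (mulfI _ (esym E1)); rewrite expf_neq0 // gt_eqF.
have h1 := hA z1 (lt_le_trans (lt_trans hz1 tKm) mA).
have h2 := hB z2 (lt_le_trans (lt_trans hz2 tKm) mB).
have : `|A y - Bf y| < 2 * e.
  have -> : A y - Bf y = (A y - A z1) - (Bf y - Bf z2) by rewrite AB; ring.
  apply: le_lt_trans (ler_normB _ _) _.
  have -> : 2 * e = e + e by ring.
  exact: ltrD h1 h2.
by rewrite /e mulrC divfK ?ltxx.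
Qed.
End Line.

Section Calc.
Variables (R : realType) (q : nat).
Local Notation V := 'rV[R]_q.
Implicit Types (f g : V -> R) (y v : V).

Lemma dvM f g y v : derivable f y v -> derivable g y v ->
  derivable (fun z => f z * g z) y v /\
  'D_v (fun z => f z * g z) y = f y * 'D_v g y + g y * 'D_v f y.
Proof. by move=> df dg; split; [exact: derivableM | exact: deriveM]. Qed.

Lemma dvD f g y v : derivable f y v -> derivable g y v ->
  derivable (fun z => f z + g z) y v /\
  'D_v (fun z => f z + g z) y = 'D_v f y + 'D_v g y.
Proof. by move=> df dg; split; [exact: derivableD | exact: deriveD]. Qed.

Lemma dvB f g y v : derivable f y v -> derivable g y v ->
  derivable (fun z => f z - g z) y v /\
  'D_v (fun z => f z - g z) y = 'D_v f y - 'D_v g y.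
Proof. by move=> df dg; split; [exact: derivableB | exact: deriveB]. Qed.

Lemma dvC (c : R) f y v : derivable f y v ->
  derivable (fun z => c * f z) y v /\ 'D_v (fun z => c * f z) y = c * 'D_v f y.
Proof.
move=> df; have [h1 h2] := dvM (derivable_cst c y v) df.
by split => //; rewrite h2 derive_cst mulr0 addr0.
Qed.

Lemma dvS n (F : 'I_n -> V -> R) y v : (forall i, derivable (F i) y v) ->
  derivable (fun z => \sum_(i < n) F i z) y v /\
  'D_v (fun z => \sum_(i < n) F i z) y = \sum_(i < n) 'D_v (F i) y.
Proof.
move=> dF.
have -> : (fun z => \sum_(i < n) F i z) = \sum_(i < n) F i.
  by apply: funext => z; rewrite fct_sumE.
by split; [exact: derivable_sum | exact: derive_sum].
Qed.

Lemma dv_bigsum (I : Type) (r : seq I) (P : pred I) (F : I -> V -> R) y v :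
  (forall i, derivable (F i) y v) ->
  derivable (fun z => \sum_(i <- r | P i) F i z) y v.
Proof.
move=> dF; elim: r => [|x r IH].
  have -> : (fun z => \sum_(i <- [::] | P i) F i z) = cst 0.
    by apply: funext => z; rewrite big_nil.
  exact: derivable_cst.
have -> : (fun z => \sum_(i <- x :: r | P i) F i z) =
  fun z => if P x then F x z + \sum_(i <- r | P i) F i z else \sum_(i <- r | P i) F i z.
  by apply: funext => z; rewrite big_cons.
by case: (P x) => //; exact: (dvD (dF x) IH).1.
Qed.

Lemma dv_bigprod (I : Type) (r : seq I) (P : pred I) (F : I -> V -> R) y v :
  (forall i, derivable (F i) y v) ->
  derivable (fun z => \prod_(i <- r | P i) F i z) y v.
Proof.
move=> dF; elim: r => [|x r IH].
  have -> : (fun z => \prod_(i <- [::] | P i) F i z) = cst 1.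
    by apply: funext => z; rewrite big_nil.
  exact: derivable_cst.
have -> : (fun z => \prod_(i <- x :: r | P i) F i z) =
  fun z => if P x then F x z * \prod_(i <- r | P i) F i z else \prod_(i <- r | P i) F i z.
  by apply: funext => z; rewrite big_cons.
by case: (P x) => //; exact: (dvM (dF x) IH).1.
Qed.

Lemma dv_det n (M : V -> 'M[R]_n) y v :
  (forall a b, derivable (fun z => M z a b) y v) ->
  derivable (fun z => \det (M z)) y v.
Proof.
move=> dM; rewrite /determinant; apply: dv_bigsum => s.
by apply: (dvC _ _).1; apply: dv_bigprod => i; exact: dM.
Qed.

Lemma dv_adj n (M : V -> 'M[R]_n) y v i j :
  (forall a b, derivable (fun z => M z a b) y v) ->
  derivable (fun z => \adj (M z) i j) y v.
Proof.
move=> dM.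
have -> : (fun z => \adj (M z) i j) =
   fun z => (-1) ^+ (j + i) * \det (row' j (col' i (M z))).
  by apply: funext => z; rewrite mxE.
apply: (dvC _ _).1; apply: dv_det => a b.
have -> : (fun z => row' j (col' i (M z)) a b) = fun z => M z (lift j a) (lift i b).
  by apply: funext => z; rewrite !mxE.
exact: dM.
Qed.
End Calc.

Section Main.
Variables (R : realType) (q : nat) (U : set 'rV[R]_q) (h : 'rV[R]_q -> R).
Local Notation V := 'rV[R]_q.
Local Notation I := 'I_q.
Hypothesis oU : open U.
Hypothesis sm : smooth_on U h.

Lemma pd_loc (f g : V -> R) i y : U y -> (forall z, U z -> f z = g z) ->
  pd i f y = pd i g y.
Proof.
move=> Uy fg; rewrite /pd; apply: near_eq_derive.
have : nbhs y U by apply: open_nbhs_nbhs.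
by apply: filterS => z Uz; apply: fg.
Qed.

Lemma swap_outer s i j y : U y ->
  pd i (pd j (iter_pd s h)) y = pd j (pd i (iter_pd s h)) y.
Proof.
move=> Uy; rewrite /pd.
apply: (@young R q (iter_pd s h) U (ecoord R j) (ecoord R i) y oU Uy).
- by move=> z Uz; exact: sm s z Uz.
- by move=> z Uz; exact: sm (j :: s) z Uz.
- by move=> z Uz; exact: sm (i :: s) z Uz.
- by apply: differentiable_continuous; exact: (sm (i :: j :: s) Uy).
- by apply: differentiable_continuous; exact: (sm (j :: i :: s) Uy).
Qed.

Definition T3 y (a b c : I) : R := pd a (pd b (pd c h)) y.
Definition F4 y (a b c d : I) : R := pd a (pd b (pd c (pd d h))) y.

Lemma gsym y a b : U y -> gco h a b y = gco h b a y.
Proof. by move=> Uy; exact: (swap_outer [::] a b Uy). Qed.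

Lemma T3_12 y a b c : U y -> T3 y a b c = T3 y b a c.
Proof. by move=> Uy; exact: (swap_outer [:: c] a b Uy). Qed.

Lemma T3_23 y a b c : U y -> T3 y a b c = T3 y a c b.
Proof.
move=> Uy; rewrite /T3.
apply: (@pd_loc (pd b (pd c h)) (pd c (pd b h)) a y Uy) => z Uz.
have H := swap_outer [::] b c Uz; rewrite /iter_pd /= in H; exact H.
Qed.

Lemma F4_12 y a b c d : U y -> F4 y a b c d = F4 y b a c d.
Proof.
move=> Uy; have H := swap_outer [:: c; d] a b Uy; rewrite /iter_pd /= in H; exact H.
Qed.

Lemma F4_23 y a b c d : U y -> F4 y a b c d = F4 y a c b d.
Proof.
move=> Uy; rewrite /F4.
apply: (@pd_loc (pd b (pd c (pd d h))) (pd c (pd b (pd d h))) a y Uy) => z Uz.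
have H := swap_outer [:: d] b c Uz; rewrite /iter_pd /= in H; exact H.
Qed.

Lemma F4_34 y a b c d : U y -> F4 y a b c d = F4 y a b d c.
Proof.
move=> Uy; rewrite /F4.
apply: (@pd_loc (pd b (pd c (pd d h))) (pd b (pd d (pd c h))) a y Uy) => z Uz.
apply: (@pd_loc (pd c (pd d h)) (pd d (pd c h)) b z Uz) => w Uw.
have H := swap_outer [::] c d Uw; rewrite /iter_pd /= in H; exact H.
Qed.
Hypothesis pdef : pos_def_on h U.

Lemma gmx_unit z : U z -> gmx h z \in unitmx.
Proof.
move=> Uz; rewrite unitmxE unitfE; apply/negP => /det0P [v v0 vG].
have := pdef Uz v0.
have -> : \sum_(i < q) \sum_(j < q) v 0 i * gco h i j z * v 0 j =
    \sum_j (v *m gmx h z) 0 j * v 0 j.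
  rewrite exchange_big; apply: eq_bigr => j _; rewrite mxE big_distrl.
  by apply: eq_bigr => i _; rewrite mxE.
by rewrite vG big1 ?ltxx // => j _; rewrite mxE mul0r.
Qed.

Lemma near_U y : U y -> \near y, U y.
Proof. by move=> Uy; apply: open_nbhs_nbhs. Qed.

Lemma dv_it s y v : U y -> derivable (iter_pd s h) y v.
Proof. by move=> Uy; apply: diff_derivable; exact: sm. Qed.

Lemma dv_gmx y v a b : U y -> derivable (fun z => gmx h z a b) y v.
Proof.
move=> Uy; have -> : (fun z => gmx h z a b) = gco h a b.
  by apply: funext => z; rewrite mxE.
have H := dv_it (s:=[:: a; b]) (v:=v) Uy; rewrite /iter_pd /= in H; exact H.
Qed.

Lemma ginv_entry z i m : U z ->
  ginv h z i m = (\det (gmx h z))^-1 * \adj (gmx h z) i m.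
Proof. by move=> Uz; rewrite /ginv /invmx (gmx_unit Uz) mxE. Qed.

Lemma dv_ginv y v i m : U y -> derivable (fun z => ginv h z i m) y v.
Proof.
move=> Uy.
apply: (@near_eq_derivable _ _ _ (fun z => (\det (gmx h z))^-1 * \adj (gmx h z) i m)).
  by apply: filterS (near_U Uy) => z Uz; rewrite ginv_entry.
apply: (dvM _ _).1.
  apply: derivableV.
    by rewrite -unitfE -unitmxE gmx_unit.
  by apply: dv_det => a b; exact: dv_gmx.
by apply: dv_adj => a b; exact: dv_gmx.
Qed.
Lemma ginv_gmx z i m : U z -> \sum_l ginv h z i l * gco h l m z = (i == m)%:R.
Proof.
move=> Uz; have := mulVmx (gmx_unit Uz).
move/matrixP => /(_ i m); rewrite !mxE => <-.
by apply: eq_bigr => l _; rewrite mxE.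
Qed.

Lemma gmx_ginv z i m : U z -> \sum_l gco h i l z * ginv h z l m = (i == m)%:R.
Proof.
move=> Uz; have := mulmxV (gmx_unit Uz).
move/matrixP => /(_ i m); rewrite !mxE => <-.
by apply: eq_bigr => l _; rewrite mxE.
Qed.

Lemma dv_gco y v a b : U y -> derivable (gco h a b) y v.
Proof. move=> Uy; have H := dv_it (s:=[:: a; b]) (v:=v) Uy; rewrite /iter_pd /= in H; exact H. Qed.

Lemma d_ginv y k i j : U y ->
  'D_(ecoord R k) (fun z => ginv h z i j) y =
  - \sum_l \sum_m ginv h y i l * pd k (gco h l m) y * ginv h y m j.
Proof.
move=> Uy.
set dB := fun l => 'D_(ecoord R k) (fun z => ginv h z i l) y.
have E m : \sum_l (ginv h y i l * pd k (gco h l m) y + gco h l m y * dB l) = 0.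
  have D0 : 'D_(ecoord R k) (fun z => \sum_l ginv h z i l * gco h l m z) y = 0.
    rewrite (near_eq_derive (g := fun _ : V => ((i == m)%:R : R))).
      by rewrite derive_cst.
    by apply: filterS (near_U Uy) => z Uz; rewrite ginv_gmx.
  have dl l := dvM (dv_ginv (v:=ecoord R k) (i:=i) (m:=l) Uy)
                    (dv_gco (v:=ecoord R k) (a:=l) (b:=m) Uy).
  rewrite -[RHS]D0 (dvS (fun l => (dl l).1)).2.
  by apply: eq_bigr => l _; rewrite (dl l).2.
have E' m : \sum_l gco h l m y * dB l = - \sum_l ginv h y i l * pd k (gco h l m) y.
  by apply/eqP; rewrite -addr_eq0 addrC -big_split /= E.
have -> : 'D_(ecoord R k) (fun z => ginv h z i j) y =
    \sum_l dB l * \sum_m gco h l m y * ginv h y m j.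
  under eq_bigr do rewrite gmx_ginv //.
  rewrite (bigD1 j) //= eqxx mulr1 big1 ?addr0 // => l /negbTE ->.
  by rewrite mulr0.
under eq_bigr do rewrite mulr_sumr.
rewrite exchange_big /=.
under eq_bigr => m _.
  rewrite (eq_bigr (fun l => (gco h l m y * dB l) * ginv h y m j)); last by move=> *; ring.
  rewrite -big_distrl /= E' mulNr big_distrl /=.
  over.
rewrite sumrN; congr (- _).
rewrite exchange_big /=; apply: eq_bigr => l _; apply: eq_bigr => m _.
by [].
Qed.
Lemma gam_eq y i j k : U y -> gam h i j k y = 2^-1 * \sum_m ginv h y i m * T3 y m j k.
Proof.
move=> Uy; rewrite /gam; congr (_ * _); apply: eq_bigr => m _; congr (_ * _).
change (T3 y j m k + T3 y k m j - T3 y m j k = T3 y m j k).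
rewrite (T3_12 j m k Uy) (T3_12 k m j Uy) (T3_23 m k j Uy); ring.
Qed.

Lemma dv3 y v a b c : U y -> derivable (pd a (gco h b c)) y v.
Proof. move=> Uy; have H := dv_it (s:=[:: a; b; c]) (v:=v) Uy; rewrite /iter_pd /= in H; exact H. Qed.

Lemma Qco_eq y i j k l : U y -> Qco h i j k l y =
  2^-1 * \sum_m (ginv h y i m * F4 y m j l k -
     T3 y m j l * \sum_a \sum_b ginv h y i a * T3 y k a b * ginv h y b m).
Proof.
move=> Uy; rewrite /Qco /gam.
set v := ecoord R k.
have dS m := dvB (dvD (dv3 (v:=v) (a:=j) (b:=m) (c:=l) Uy) (dv3 (v:=v) (a:=l) (b:=m) (c:=j) Uy)).1 (dv3 (v:=v) (a:=m) (b:=j) (c:=l) Uy).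
have dT m := dvM (dv_ginv (v:=v) (i:=i) (m:=m) Uy) (dS m).1.
have dSum := dvS (fun m => (dT m).1).
rewrite /pd (dvC 2^-1 dSum.1).2 dSum.2; congr (_ * _); apply: eq_bigr => m _.
rewrite (dT m).2 (dS m).2 (dvD (dv3 (v:=v) (a:=j) (b:=m) (c:=l) Uy) (dv3 (v:=v) (a:=l) (b:=m) (c:=j) Uy)).2 d_ginv //.
change (ginv h y i m * (F4 y k j m l + F4 y k l m j - F4 y k m j l) +
  (T3 y j m l + T3 y l m j - T3 y m j l) *
    - (\sum_l0 \sum_m0 ginv h y i l0 * T3 y k l0 m0 * ginv h y m0 m) =
  ginv h y i m * F4 y m j l k -
    T3 y m j l * (\sum_a \sum_b ginv h y i a * T3 y k a b * ginv h y b m)).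
rewrite (F4_12 k j m l Uy) (F4_23 j k m l Uy) (F4_12 j m k l Uy) (F4_34 m j k l Uy).
rewrite (F4_12 k l m j Uy) (F4_23 l k m j Uy) (F4_12 l m k j Uy) (F4_34 m l k j Uy) (F4_23 m l j k Uy).
rewrite (F4_12 k m j l Uy) (F4_23 m k j l Uy) (F4_34 m j k l Uy).
rewrite (T3_12 j m l Uy) (T3_12 l m j Uy) (T3_23 m l j Uy).
ring.
Qed.
End Main.

Theorem corollary2 (R : realType) (q : nat) (U : set 'rV[R]_q)
  (h : 'rV[R]_q -> R) (c : R) :
  open U ->
  smooth_on U h ->
  pos_def_on h U ->
  const_hess_sec h U c ->
  const_sec_curv h U (- (c / 4)).
Proof.
move=> oU sm pdef hess y Uy X Y rk.
pose g : 'I_q -> 'I_q -> R := fun a b => gco h a b y.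
pose B : 'I_q -> 'I_q -> R := fun a b => ginv h y a b.
pose T := T3 h y. pose F := F4 h y.
have gs : forall a b, g a b = g b a by move=> a b; rewrite /g; move: (gsym oU sm a b Uy); exact.
have Bs : forall a b, B a b = B b a.
  move=> a b; rewrite /B /ginv.
  have GT : (gmx h y)^T = gmx h y.
    by apply/matrixP => i j; rewrite !mxE (gsym oU sm i j Uy).
  have E := trmx_inv (gmx h y); rewrite GT in E.
  by move/matrixP: E => /(_ b a); rewrite mxE.
have gB' : forall a b, \sum_k g a k * B k b = (a == b)%:R.
  by move=> a b; rewrite /g /B; move: (gmx_ginv pdef a b Uy); exact.
have T12 : forall a b c, T a b c = T b a c by move=> a b c0; rewrite /T; move: (T3_12 oU sm a b c0 Uy); exact.
have T23 : forall a b c, T a b c = T a c b by move=> a b c0; rewrite /T; move: (T3_23 oU sm a b c0 Uy); exact.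
have F12 : forall a b c d, F a b c d = F b a c d by move=> a b c0 d; rewrite /F; move: (F4_12 oU sm a b c0 d Uy); exact.
have F23 : forall a b c d, F a b c d = F a c b d by move=> a b c0 d; rewrite /F; move: (F4_23 oU sm a b c0 d Uy); exact.
have F34 : forall a b c d, F a b c d = F a b d c by move=> a b c0 d; rewrite /F; move: (F4_34 oU sm a b c0 d Uy); exact.
have QE : forall i j k l, Qco h i j k l y = Qc B T F i j k l.
  by move=> i j k l; rewrite (Qco_eq oU sm pdef i j k l Uy).
have GE : forall i j k, gam h i j k y = gm B T i j k.
  by move=> i j k; rewrite (gam_eq oU sm i j k Uy).
have pos : forall x : 'rV[R]_q, x != 0 -> 0 < g2 g (rv x) (rv x).
  by move=> x x0; rewrite /g; move: (pdef y Uy x x0); exact.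
have HH : forall xi, xi^T = xi -> xi != 0 ->
    tin g (aQhat B (Qc B T F) xi) xi / tin g xi xi = c.
  move=> xi xT x0.
  have QF : (fun i j k l => Qco h i j k l y) = Qc B T F.
    by apply/funext => i; apply/funext => j; apply/funext => k; apply/funext => l; rewrite QE.
  rewrite -QF; exact: hess y Uy xi xT x0.
have main := alg_final gs Bs gB' T12 T23 F12 F23 F34 pos HH rk.
rewrite -main /sec_curv; congr (_ / _).
rewrite /Nc; apply: eq_bigr => a _; apply: eq_bigr => i _; apply: eq_bigr => j _.
apply: eq_bigr => k _; apply: eq_bigr => l _.
congr (_ * _ * _ * _ * _); congr (_ * _).
rewrite /Rm /Rmc.
change (Qco h i l k j y - Qco h i k l j y +
  \sum_m (gam h i k m y * gam h m l j y - gam h i l m y * gam h m k j y) =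
  Qc B T F i l k j - Qc B T F i k l j +
  \sum_m (gm B T i k m * gm B T m l j - gm B T i l m * gm B T m k j)).
rewrite !QE; congr (_ + _); apply: eq_bigr => m _; rewrite !GE.
by [].
Qed.
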